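(* Let $G$ and $H$ be connected graphs, each with at least two vertices. Then $$\rho_o(G\square H)\geq \max\{\rho(G)\rho_o(H),\ \rho(H)\rho_o(G),\ \eta_H\rho_o(G)+\eta_G^H,\ \eta_G\rho_o(H)+\eta_H^G\},$$ where $\eta_G=\lceil(\mathrm{diam}(G)+1)/3\rceil$ and $\eta_G^H=1$ if $G\neq K_2$ and $\mathrm{diam}(H)\equiv 2 \pmod 3$, and $\eta_G^H=0$ otherwise (and symmetrically for $\eta_H$, $\eta_H^G$).
   Context: All graphs are finite and simple. A set $P\subseteq V(G)$ is a packing of $G$ if $N[u]\cap N[v]=\emptyset$ for all distinct $u,v\in P$ ($N[u]$ the closed neighborhood); $\rho(G)$ is the maximum size of a packing. A set $P$ is an open packing if the open neighborhoods $N(u)$, $u\in P$, are pairwise disjoint; $\rho_o(G)$ is the maximum size of an open packing. $\mathrm{diam}(G)$ is the diameter. The Cartesian product $G\square H$ has vertex set $V(G)\times V(H)$, with $(g,h)$ adjacent to $(g',h')$ iff ($gg'\in E(G)$ and $h=h'$) or ($g=g'$ and $hh'\in E(H)$). *)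

(* Defs.v *)
(* A finite simple graph is a finType T with a symmetric,
   irreflexive adjacency relation e : rel T. *)
From mathcomp Require Import all_boot.
Set Implicit Arguments.
Unset Strict Implicit.
Unset Printing Implicit Defensive.

Section Graphs.
Variable T : finType.
Variable e : rel T.

Definition simple_graph : Prop := symmetric e /\ irreflexive e.

Definition connected_graph : Prop := forall x y : T, connect e x y.

Definition onbhd (u : T) : {set T} := [set w | e u w].
Definition cnbhd (u : T) : {set T} := [set w | (w == u) || e u w].

Definition packing (P : {set T}) : bool :=
  [forall u in P, forall v in P, (u != v) ==> [disjoint cnbhd u & cnbhd v]].
Definition open_packing (P : {set T}) : bool :=
  [forall u in P, forall v in P, (u != v) ==> [disjoint onbhd u & onbhd v]].

Definition rho : nat := \max_(P : {set T} | packing P) #|P|.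
Definition rho_o : nat := \max_(P : {set T} | open_packing P) #|P|.

Definition walkb (x y : T) (n : nat) : bool :=
  [exists p : n.-tuple T, path e x p && (last x p == y)].

(* distance: least n with a walk of length n (any shortest walk has length
   < #|T|); equals #|T| if y is unreachable from x *)
Definition dist (x y : T) : nat := find (walkb x y) (iota 0 #|T|).

Definition diam : nat := \max_(x : T) \max_(y : T) dist x y.

Definition isK2 : bool := (#|T| == 2) && [forall x : T, forall y : T, (x != y) ==> e x y].
End Graphs.

Definition ceil_div (a b : nat) : nat := (a + b.-1) %/ b.

Definition eta (T : finType) (e : rel T) : nat := ceil_div (diam e).+1 3.

Definition eta2 (T : finType) (e : rel T) (S : finType) (f : rel S) : nat :=
  if ~~ isK2 e && (diam f %% 3 == 2) then 1 else 0.

Definition cart (T S : finType) (e : rel T) (f : rel S) : rel (T * S) :=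
  fun a b => (e a.1 b.1 && (a.2 == b.2)) || ((a.1 == b.1) && f a.2 b.2).

(* Main.v *)
Require Import Defs.
From mathcomp Require Import all_boot zify.
Set Implicit Arguments.
Unset Strict Implicit.

Section W.
Variable T : finType.
Variable e : rel T.

Lemma walkbP x y n : reflect (exists p : seq T, [/\ size p = n, path e x p & last x p = y]) (walkb e x y n).
Proof.
apply: (iffP existsP) => [[t /andP[Hp /eqP Hl]] | [p [Hs Hp Hl]]].
- by exists (tval t); split => //; exact: size_tuple.
- have Hs' : size p == n by apply/eqP.
  by exists (Tuple Hs'); rewrite /= Hp Hl eqxx.
Qed.

Lemma walk0 u : walkb e u u 0.
Proof. by apply/walkbP; exists [::]. Qed.
Lemma walk1 u v : e u v -> walkb e u v 1.
Proof. by move=> H; apply/walkbP; exists [:: v]; rewrite /= H. Qed.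
Lemma walk2 u c v : e u c -> e c v -> walkb e u v 2.
Proof. by move=> H1 H2; apply/walkbP; exists [:: c; v]; rewrite /= H1 H2. Qed.

Lemma dist_min x y m : walkb e x y m -> m < #|T| -> dist e x y <= m.
Proof.
move=> Hw Hm; rewrite /dist.
case: (leqP (find (walkb e x y) (iota 0 #|T|)) m) => // Hlt.
have := @before_find _ 0 _ _ _ Hlt.
by rewrite nth_iota // add0n Hw.
Qed.

Lemma dist_walk x y : dist e x y < #|T| -> walkb e x y (dist e x y).
Proof.
move=> H.
have Hh : has (walkb e x y) (iota 0 #|T|) by rewrite has_find size_iota.
have := @nth_find _ 0 _ _ Hh.
rewrite nth_iota; first by rewrite add0n.
exact: H.
Qed.

Lemma dist_lt x y m : m < dist e x y -> ~~ walkb e x y m.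
Proof.
move=> H.
have Hle : dist e x y <= #|T|.
  by rewrite /dist; have := find_size (walkb e x y) (iota 0 #|T|); rewrite size_iota.
have := @before_find _ 0 _ _ _ H.
rewrite nth_iota; first by rewrite add0n => ->.
exact: leq_trans H Hle.
Qed.

Lemma connect_dist x y : connect e x y -> dist e x y < #|T|.
Proof.
case/connectP => p Hp ->.
case: (shortenP Hp) => p' Hp' Hu _.
have Hs : size p' < #|T|.
  have := max_card (mem (x :: p')).
  by rewrite (card_uniqP Hu).
apply: leq_ltn_trans (Hs).
apply: dist_min.
- by apply/walkbP; exists p'.
- exact: Hs.
Qed.

End W.

Section Short.
Variable S : finType.
Variable f : rel S.
Variables (x : S) (p : seq S).
Hypothesis Hp : path f x p.
Hypothesis Hmin : forall m, m < size p -> ~~ walkb f x (last x p) m.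
Definition hh i := last x (take i p).

Lemma shortcut a b k : a <= b -> b <= size p -> walkb f (hh a) (hh b) k -> b - a <= k.
Proof.
move=> Hab Hb /walkbP [q [Hq Hpq Hlq]].
rewrite leqNgt; apply/negP => Hlt.
apply: (negP (@Hmin (a + k + (size p - b)) _)); first by lia.
apply/walkbP; exists (take a p ++ q ++ drop b p); split.
- rewrite !size_cat size_takel ?size_drop; lia.
- have Hd : path f (hh b) (drop b p).
    by move: Hp; rewrite -{1}(cat_take_drop b p) cat_path => /andP[].
  rewrite !cat_path take_path //= -/(hh a) Hpq /=.
  by have -> : last (hh a) q = hh b := Hlq.
- rewrite !last_cat -/(hh a).
  have -> : last (hh a) q = hh b := Hlq.
  by rewrite /hh -last_cat cat_take_drop.
Qed.

Lemma close2 i j k : i <= size p -> j <= size p ->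
  walkb f (hh i) (hh j) k -> walkb f (hh j) (hh i) k -> (j - i <= k) /\ (i - j <= k).
Proof.
move=> Hi Hj W1 W2; case: (leqP i j) => Hij.
- split; first exact: shortcut W1.
  lia.
- split; first lia.
  apply: shortcut W2 => //; lia.
Qed.
End Short.

Section Cart.
Variables (T S : finType) (e : rel T) (f : rel S).

Definition good (a b : T * S) : Prop :=
  [/\ a.2 = b.2 -> forall c, e a.1 c -> e b.1 c -> False,
       e a.1 b.1 -> f a.2 b.2 -> False &
       a.1 = b.1 -> forall c, f a.2 c -> f b.2 c -> False].

Lemma good_sym a b : simple_graph e -> simple_graph f -> good a b -> good b a.
Proof.
move=> [esym _] [fsym _] [H1 H2 H3]; split.
- by move=> E c C1 C2; apply: (H1 _ c).
- by move=> E1 E2; apply: H2; rewrite 1?esym 1?fsym.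
- by move=> E c C1 C2; apply: (H3 _ c).
Qed.

Lemma cart_op (P : {set T * S}) : simple_graph e -> simple_graph f ->
  (forall a b, a \in P -> b \in P -> a != b -> good a b) ->
  open_packing (cart e f) P.
Proof.
move=> [esym _] [fsym _] H.
apply/forallP => a; apply/implyP => Ha; apply/forallP => b; apply/implyP => Hb; apply/implyP => Hab.
have [H1 H2 H3] := H a b Ha Hb Hab.
rewrite disjoint_subset; apply/subsetP => c; rewrite !inE /cart.
case/orP => [/andP[Hac /eqP Eac]|/andP[/eqP Eac Hac]]; apply/negP;
  case/orP => [/andP[Hbc /eqP Ebc]|/andP[/eqP Ebc Hbc]].
- by apply: (H1 _ c.1) => //; rewrite Eac Ebc.
- by apply: H2; rewrite ?Ebc // Eac fsym.
- by apply: H2; rewrite ?Ebc // Eac esym.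
- by apply: (H3 _ c.2) => //; rewrite Eac Ebc.
Qed.
End Cart.

Lemma packingE (T : finType) (e : rel T) P u v : packing e P -> u \in P -> v \in P -> u != v ->
  [disjoint cnbhd e u & cnbhd e v].
Proof.
by move=> /forallP/(_ u)/implyP H Hu Hv; move: (H Hu) => /forallP/(_ v)/implyP/(_ Hv)/implyP.
Qed.

Lemma open_packingE (T : finType) (e : rel T) P u v : open_packing e P -> u \in P -> v \in P -> u != v ->
  [disjoint onbhd e u & onbhd e v].
Proof.
by move=> /forallP/(_ u)/implyP H Hu Hv; move: (H Hu) => /forallP/(_ v)/implyP/(_ Hv)/implyP.
Qed.

Lemma rho_att (T : finType) (e : rel T) : exists2 P, packing e P & rho e = #|P|.
Proof.
have H0 : 0 < #|packing e|.
  apply/card_gt0P; exists set0.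
  by apply/forallP => u; rewrite in_set0.
have [P HP E] := @eq_bigmax_cond _ (packing e) (fun P => #|P|) H0.
by exists P.
Qed.

Lemma rho_o_att (T : finType) (e : rel T) : exists2 P, open_packing e P & rho_o e = #|P|.
Proof.
have H0 : 0 < #|open_packing e|.
  apply/card_gt0P; exists set0.
  by apply/forallP => u; rewrite in_set0.
have [P HP E] := @eq_bigmax_cond _ (open_packing e) (fun P => #|P|) H0.
by exists P.
Qed.

Lemma rho_o_ge (T : finType) (e : rel T) P : open_packing e P -> #|P| <= rho_o e.
Proof. move=> H; exact: (@leq_bigmax_cond _ (open_packing e) (fun P => #|P|) P H). Qed.

Lemma partA (T S : finType) (e : rel T) (f : rel S) :
  simple_graph e -> simple_graph f -> rho e * rho_o f <= rho_o (cart e f).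
Proof.
move=> He Hf.
have [P HP ->] := rho_att e.
have [O HO ->] := rho_o_att f.
rewrite -cardsX; apply: rho_o_ge.
apply: cart_op => //.
move=> [a1 a2] [b1 b2]; rewrite !inE /= => /andP[Pa Oa] /andP[Pb Ob] Hab.
case: He => esym eirr; case: Hf => fsym firr.
split => /=.
- move=> E c C1 C2; subst b2.
  have Hne : a1 != b1 by apply: contraNneq Hab => ->.
  have D := packingE HP Pa Pb Hne.
  have := disjointFr D (x := c).
  by rewrite !inE C1 C2 !orbT => /(_ isT).
- move=> E1 E2.
  have Hne : a1 != b1 by apply: contraTneq E1 => ->; rewrite eirr.
  have D := packingE HP Pa Pb Hne.
  have := disjointFr D (x := b1).
  by rewrite !inE E1 eqxx !orbT => /(_ isT).
- move=> E c C1 C2; subst b1.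
  have Hne : a2 != b2 by apply: contraNneq Hab => ->.
  have D := open_packingE HO Oa Ob Hne.
  have := disjointFr D (x := c).
  by rewrite !inE C1 C2 => /(_ isT).
Qed.

Lemma cart_swap (T S : finType) (e : rel T) (f : rel S) a c :
  cart e f (a.2, a.1) c = cart f e a (c.2, c.1).
Proof.
case: a c => a1 a2 [c1 c2]; rewrite /cart /=.
by case: (e a2 c1); case: (f a1 c2); case: (a1 == c2); case: (a2 == c1).
Qed.

Lemma swap_le (T S : finType) (e : rel T) (f : rel S) :
  rho_o (cart f e) <= rho_o (cart e f).
Proof.
have [P HP ->] := rho_o_att (cart f e).
have Hinj : injective (fun a : S * T => (a.2, a.1)).
  by move=> [a1 a2] [b1 b2] [-> ->].
rewrite -(card_imset _ Hinj); apply: rho_o_ge.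
apply/forallP => u; apply/implyP => /imsetP [a Ha ->].
apply/forallP => v; apply/implyP => /imsetP [b Hb ->].
apply/implyP => Hab.
have Hne : a != b by apply: contraNneq Hab => ->.
have D := open_packingE HP Ha Hb Hne.
rewrite disjoint_subset; apply/subsetP => c; rewrite !inE => C1.
apply/negP => C2.
have := disjointFr D (x := (c.2, c.1)).
by rewrite !inE -!cart_swap C1 C2 => /(_ isT).
Qed.

Lemma closed_path (T : finType) (e : rel T) (A : {set T}) :
  (forall u v, u \in A -> e u v -> v \in A) ->
  forall q u, path e u q -> u \in A -> last u q \in A.
Proof.
move=> HA; elim => [|v q IH] u //= /andP[Huv Hq] Hu.
apply: IH Hq _; exact: HA Hu Huv.
Qed.

Lemma K2_lemma (T : finType) (e : rel T) :
  simple_graph e -> connected_graph e -> 2 <= #|T| -> open_packing e [set: T] -> isK2 e.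
Proof.
move=> [esym eirr] Hc H2 HO.
have [x _] : exists x : T, x \in T.
  by apply/card_gt0P; apply: ltnW.
have [y Hy] : exists y, y \in predC1 x.
  by apply/card_gt0P; rewrite cardC1; case: #|T| H2 => [|[|n]].
case/connectP: (Hc x y) => [[|x' q]] /=.
  by move=> _ Exy; move: Hy; rewrite !inE Exy eqxx.
move=> /andP[Hxx' Hq] _.
have deg : forall w u v, e w u -> e w v -> u = v.
  move=> w u v Hu Hv; apply/eqP; apply/negPn/negP => Huv.
  have D := open_packingE HO (in_setT u) (in_setT v) Huv.
  have := disjointFr D (x := w).
  by rewrite !inE esym Hu esym Hv => /(_ isT).
set A := [set x; x'].
have HA : forall u v, u \in A -> e u v -> v \in A.
  move=> u v; rewrite !inE => /orP[/eqP->|/eqP->] Huv.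
  - by rewrite (deg _ _ _ Huv Hxx') eqxx orbT.
  - by rewrite (deg _ _ _ Huv (_ : e x' x)) ?eqxx // esym.
have All : forall w, w \in A.
  move=> w; case/connectP: (Hc x w) => r Hr ->.
  by apply: (closed_path HA Hr); rewrite !inE eqxx.
have Hxne : x != x' by apply: contraTneq Hxx' => ->; rewrite eirr.
apply/andP; split.
- rewrite eqn_leq H2 andbT.
  have := subset_leq_card (subsetT A); rewrite cardsT => H.
  have HT : [set: T] \subset A by apply/subsetP => w _; exact: All.
  have := subset_leq_card HT; rewrite cardsT cards2 Hxne; done.
- apply/forallP => u; apply/forallP => v; apply/implyP => Huv.
  move: (All u) (All v); rewrite !inE => /orP[/eqP Eu|/eqP Eu] /orP[/eqP Ev|/eqP Ev]; subst u v.
  + by exfalso; exact: (negP Huv (eqxx _)).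
  + by [].
  + by rewrite esym.
  + by exfalso; exact: (negP Huv (eqxx _)).
Qed.

Lemma partC (T S : finType) (e : rel T) (f : rel S) :
  simple_graph e -> simple_graph f -> connected_graph e -> connected_graph f ->
  2 <= #|T| -> 2 <= #|S| ->
  eta f * rho_o e + eta2 e f <= rho_o (cart e f).
Proof.
move=> He Hf Hce Hcf HT HS.
have [O HO ->] := rho_o_att e.
have S0 : 0 < #|S| by apply: ltnW.
have [x0 Ex] := eq_bigmax (fun x => \max_y dist f x y) S0.
have [y0 Ey] := eq_bigmax (fun y => dist f x0 y) S0.
have Ed : diam f = dist f x0 y0 := etrans Ex Ey.
have Hlt := connect_dist (Hcf x0 y0).
case/walkbP: (dist_walk Hlt) => p [Hsz Hp Hl].
have Hmin : forall m, m < size p -> ~~ walkb f x0 (last x0 p) m.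
  by move=> m; rewrite Hsz Hl; apply: dist_lt.
have cl := close2 Hp Hmin.
case: (He) => esym eirr; case: (Hf) => fsym firr.
set K := eta f.
have Key : forall k : 'I_K, 3 * k <= size p.
  move=> k; rewrite Hsz -Ed; have := ltn_ord k; rewrite /K /eta /ceil_div /=; lia.
set F := fun gk : T * 'I_K => (gk.1, hh x0 p (3 * gk.2)).
set Q := F @: setX O [set: 'I_K].
have hinj : forall i j : 'I_K, hh x0 p (3 * i) = hh x0 p (3 * j) -> i = j.
  move=> i j E.
  have [c1 c2] := cl _ _ 0 (Key i) (Key j) (ltac:(by rewrite E; apply: walk0)) (ltac:(by rewrite E; apply: walk0)).
  apply: val_inj => /=; lia.
have GQ : forall a b, a \in Q -> b \in Q -> a != b -> good e f a b.
  move=> a b /imsetP[[g i] /setXP[Og _] ->] /imsetP[[g' j] /setXP[Og' _] ->] Hab.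
  rewrite /F /= in Hab *.
  split => /=.
  - move=> E c C1 C2; have Eij := hinj _ _ E; subst j.
    have Hne : g != g' by apply: contraNneq Hab => ->.
    have D := open_packingE HO Og Og' Hne.
    have := disjointFr D (x := c).
    by rewrite !inE C1 C2 => /(_ isT).
  - move=> E1 E2.
    have [c1 c2] := cl _ _ 1 (Key i) (Key j) (walk1 E2) (ltac:(by apply: walk1; rewrite fsym)).
    have Eij : i = j by apply: val_inj => /=; lia.
    by subst j; rewrite firr in E2.
  - move=> E c C1 C2.
    have [c1 c2] := cl _ _ 2 (Key i) (Key j) (ltac:(by apply: (walk2 C1); rewrite fsym))
      (ltac:(by apply: (walk2 C2); rewrite fsym)).
    have Eij : i = j by apply: val_inj => /=; lia.
    subst j g'; exfalso; exact: (negP Hab (eqxx _)).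
have cardQ : #|Q| = #|O| * K.
  rewrite card_in_imset ?cardsX ?cardsT ?card_ord //.
  move=> [g i] [g' j] _ _; rewrite /F /= => -[-> E].
  by rewrite (hinj _ _ E).
rewrite /eta2; case: ifP => [/andP[HK Hmod] | _]; last first.
  rewrite addn0 mulnC -cardQ; apply: rho_o_ge; exact: cart_op.
have [z Hz] : exists z, z \notin O.
  case: (pickP (fun z => z \notin O)) => [z Hz | H0]; first by exists z.
  exfalso.
  have EO : O = [set: T].
    by apply/setP => z; rewrite inE; move: (H0 z) => /= /negbFE.
  rewrite EO in HO.
  by move: HK; rewrite (K2_lemma He Hce HT HO).
have Hy0 : y0 = hh x0 p (size p) by rewrite /hh take_size Hl.
have Key2 : forall k : 'I_K, 3 * k + 2 <= size p.
  move=> k; rewrite Hsz -Ed; have := ltn_ord k; move/eqP: Hmod.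
  rewrite /K /eta /ceil_div /=; lia.
have Gz : forall g (i : 'I_K), g \in O -> good e f (z, y0) (g, hh x0 p (3 * i)).
  move=> g i Og; split => /=.
  - move=> E c _ _.
    have [c1 c2] := cl _ _ 0 (leqnn _) (Key i) (ltac:(by rewrite -Hy0 E; apply: walk0))
      (ltac:(by rewrite -Hy0 E; apply: walk0)).
    have := Key2 i; lia.
  - move=> E1 E2.
    have [c1 c2] := cl _ _ 1 (leqnn _) (Key i) (ltac:(by rewrite -Hy0; apply: walk1))
      (ltac:(by rewrite -Hy0; apply: walk1; rewrite fsym)).
    have := Key2 i; lia.
  - by move=> E; move: Hz; rewrite E Og.
have HzQ : (z, y0) \notin Q.
  apply/imsetP => [[[g i] /setXP[Og _] [Ez _]]].
  by move: Hz; rewrite Ez Og.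
apply: leq_trans (rho_o_ge (P := (z, y0) |: Q) _).
  rewrite cardsU1 HzQ cardQ /=; lia.
apply: cart_op => // a b; rewrite !in_setU1.
case/orP => [/eqP -> | Ha]; case/orP => [/eqP -> | Hb] Hab.
- by exfalso; exact: (negP Hab (eqxx _)).
- move: Hb => /imsetP[[g i] /setXP[Og _] ->]; exact: Gz.
- apply: good_sym => //.
  move: Ha => /imsetP[[g i] /setXP[Og _] ->]; exact: Gz.
- exact: GQ.
Qed.

Unset Implicit Arguments.

Theorem theorem4 (T : finType) (e : rel T) (S : finType) (f : rel S) :
  simple_graph e -> simple_graph f ->
  connected_graph e -> connected_graph f ->
  2 <= #|T| -> 2 <= #|S| ->
  maxn (maxn (rho e * rho_o f) (rho f * rho_o e))
       (maxn (eta f * rho_o e + eta2 e f) (eta e * rho_o f + eta2 f e))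
  <= rho_o (cart e f).
Proof.
move=> He Hf Hce Hcf HT HS.
rewrite !geq_max partA // partC //=.
rewrite (leq_trans (partA Hf He) (swap_le _ _)) //.
exact: (leq_trans (partC Hf He Hcf Hce HS HT) (swap_le _ _)).
Qed.
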